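(* Let $H$ be a finite group, $N$ a normal subgroup of $H$, and let $M_1, \dots, M_k$ be maximal subgroups of $H$ in general position. Then the $M_i$ can be reindexed and an integer $l$ with $0 \le l \le k$ chosen so that $\{M_1 \cap N, \dots, M_l \cap N\}$ is in general position and, for every $j > l$, $M_j \cap N \supseteq \bigcap_{1 \leq i \leq l} (M_i \cap N)$. Moreover, for such an arrangement, if $\pi : H \to H/N$ is the projection and $R = \bigcap_{1 \le i \le l} M_i$, then the subgroups $\pi(R \cap M_j)$, $l < j \le k$, of $H/N$ are in general position.
   Context: All groups are finite. A finite set $\{H_1,\dots,H_n\}$ of subgroups of a group $G$ is in general position if for every $1 \le j \le n$, $\bigcap_{i \neq j} H_i \supsetneq \bigcap_{i} H_i$. *)

(* Defs.v *)
From mathcomp Require Import all_boot all_fingroup all_solvable.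
Set Implicit Arguments. Unset Strict Implicit. Unset Printing Implicit Defensive.

Local Open Scope group_scope.

(* General position of an indexed family [A i], i \in P, of subgroups of an
   ambient group G: for every j in P, the intersection of the A i with i in P,
   i <> j, strictly contains the intersection of all A i, i in P.
   Intersections are taken inside the ambient G (so the empty intersection
   is G itself). *)
Definition gen_pos (gT : finGroupType) (I : finType) (G : {set gT})
    (P : {set I}) (A : I -> {set gT}) : Prop :=
  forall j, j \in P ->
    (G :&: \bigcap_(i in P) A i) \proper (G :&: \bigcap_(i in P | i != j) A i).

(* Main.v *)
Require Import Defs.
From mathcomp Require Import all_boot all_fingroup all_solvable.

Local Open Scope group_scope.

Lemma capP (gT : finGroupType) (I : finType) (G : {set gT}) (P : pred I)
   (A : I -> {set gT}) x :
  reflect (x \in G /\ forall i, P i -> x \in A i) (x \in G :&: \bigcap_(i | P i) A i).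
Proof.
apply: (iffP idP).
  by rewrite inE => /andP[xG /bigcapP h].
by case=> xG h; rewrite inE xG; apply/bigcapP.
Qed.

Theorem lemma2p5 (gT : finGroupType) (H N : {group gT}) (k : nat)
    (M : 'I_k -> {group gT}) :
  N <| H ->
  (forall i, maximal (M i) H) ->
  gen_pos H [set: 'I_k] (fun i => gval (M i)) ->
  (exists S : {set 'I_k},
     gen_pos N S (fun i => M i :&: N) /\
     (forall j, j \notin S -> N :&: \bigcap_(i in S) (M i :&: N) \subset M j :&: N))
  /\
  (forall S : {set 'I_k},
     gen_pos N S (fun i => M i :&: N) ->
     (forall j, j \notin S -> N :&: \bigcap_(i in S) (M i :&: N) \subset M j :&: N) ->
     let R := H :&: \bigcap_(i in S) M i in
     gen_pos (H / N) (~: S) (fun j => (R :&: M j) / N)).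
Proof.
move=> nNH _ gpH; split.
  set f := fun S : {set 'I_k} => N :&: \bigcap_(i in S) (M i :&: N).
  case: (@arg_minnP _ setT (fun S => f S == f setT) (fun S => #|S|) (eqxx _))
    => S /eqP hS hmin.
  exists S; split.
    move=> j jS; rewrite properE; apply/andP; split.
      apply/subsetP=> x /capP[xN h]; apply/capP; split=> // i /andP[iS _].
      exact: h.
    apply/negP=> sub.
    have : f (S :\ j) == f setT.
      rewrite -hS eqEsubset; apply/andP; split.
        apply: subset_trans sub; apply/subsetP=> x /capP[xN h].
        apply/capP; split=> // i /andP[iS ij]; apply: h; by rewrite !inE ij.
      apply/subsetP=> x /capP[xN h]; apply/capP; split=> // i.
      by rewrite in_setD1 => /andP[_ iS]; apply: h.
    move/hmin; rewrite (cardsD1 j S) jS; case: #|S :\ j| => //= n.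
    by rewrite ltnn.
  move=> j _; rewrite -/(f S) hS; apply/subsetP=> x /capP[xN h].
  by apply: h.
move=> S _ hS R j; rewrite inE => jS.
have nH := normal_norm nNH.
have [x /capP[xH xM] /negP xnot] : exists2 x,
    x \in H :&: \bigcap_(i in [set: 'I_k] | i != j) M i &
    x \notin H :&: \bigcap_(i in [set: 'I_k]) M i.
  have := gpH j (in_setT j); rewrite properE => /andP[_ /subsetPn[x h1 h2]].
  by exists x.
have xj : x \notin M j.
  apply/negP=> xMj; apply: xnot; apply/capP; split=> // i _.
  case: (eqVneq i j) => [->|ij] //; apply: xM; by rewrite inE.
have xR : x \in R.
  apply/capP; split=> // i iS; apply: xM; rewrite inE.
  by apply/negP=> /eqP eij; rewrite -eij iS in jS.
rewrite properE; apply/andP; split.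
  apply/subsetP=> y /capP[yH h]; apply/capP; split=> // i /andP[iS _].
  exact: h.
apply/subsetPn; exists (coset N x).
  apply/capP; split; first exact: mem_quotient.
  move=> i /andP[iS ij]; apply: mem_quotient; rewrite inE xR /=.
  by apply: xM; rewrite inE.
apply/negP=> /capP[_ /(_ j)]; rewrite inE jS => /(_ isT) hq.
have RjN : R :&: M j \subset 'N(N).
  by apply: subset_trans (subsetIl _ _) _; apply: subset_trans (subsetIl _ _) nH.
have : x \in coset N @*^-1 ((R :&: M j) / N).
  by apply: mem_morphpre => //; rewrite (subsetP nH x xH).
rewrite quotientK // => /mulsgP[n y nN /setIP[yR yMj] exy].
apply/negP: xj; apply/negPn.
have nMi : forall i, i \in S -> n \in M i.
  move=> i iS; have := yR; move/capP=> [_ hy].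
  have := xR; move/capP=> [_ hx].
  by rewrite -(mulgK y n) -exy groupM ?groupV ?hx ?hy.
have nH' : n \in H.
  have := yR; move/capP=> [yH _].
  by rewrite -(mulgK y n) -exy groupM ?groupV.
have : n \in M j :&: N.
  apply: (subsetP (hS j jS)); apply/capP; split=> // i iS.
  by rewrite inE nMi.
case/setIP=> nMj _.
by rewrite exy groupM.
Qed.
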